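(* Let $X=(V,E,T)$ be an $(s,k,K)$-two layer system and let $C\subseteq\mathbb{F}_p^V$ be a linear code modelled over $X$ with constraint set $\mathcal{E}$ ($p$ a prime power). For every $v_0\in V$ and every $\underline{c}\in\mathbb{F}_p^V$ there is $\underline{c}'\in\mathbb{F}_p^V$ with $\underline{c}'(v)=\underline{c}(v)$ for all $v\ne v_0$ and $$\frac{m_{v_0}(\{\operatorname{supp}(\underline{e}):\underline{e}\in\mathcal{E},\ \operatorname{supp}(\underline{e})\in E_{v_0},\ \underline{e}\cdot\underline{c}'\neq0\})}{m_{v_0}(E_{v_0})}\le\frac{p-1}{p}.$$
   Context: Let $s,k,K$ be positive integers. An $(s,k,K)$-two layer system is a triple $X=(V,E,T)$ where: $V$ is a finite set; $E\subseteq 2^V$ with $|\tau|=k$ for all $\tau\in E$ and $\bigcup_{\tau\in E}\tau=V$; $T\subseteq 2^E$ with $|\sigma|=K$ for all $\sigma\in T$ and $\bigcup_{\sigma\in T}\sigma=E$. Write $v\in\sigma$ if $v\in\tau$ for some $\tau\in\sigma$; it is required that $2\le|\{\tau\in\sigma:v\in\tau\}|\le s$ for all $\sigma\in T$, $v\in\sigma$. A positive $w:T\to\mathbb{R}_{>0}$ is fixed and extended by $w(\tau)=\sum_{\sigma\ni\tau}w(\sigma)$ for $\tau\in E$. For $v\in V$, $E_v=\{\tau\in E:v\in\tau\}$; the link of $v$ is the graph on $E_v$ where distinct $\tau_1,\tau_2$ are adjacent iff some $\sigma\in T$ contains both, with weight $m_v(\{\tau_1,\tau_2\})=\sum_{\sigma\in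 T,\tau_1,\tau_2\in\sigma}w(\sigma)$; $m_v(\tau)$ is the sum of weights of link edges at $\tau$, and $m_v(B)=\sum_{\tau\in B}m_v(\tau)$ for $B\subseteq E_v$. Codes: $\mathbb{F}_p$ is the field with $p$ elements; $\underline{e}\cdot\underline{c}=\sum_v\underline{e}(v)\underline{c}(v)$, $\operatorname{supp}(\underline{e})=\{v:\underline{e}(v)\neq0\}$. A linear code $C\subseteq\mathbb{F}_p^V$ is modelled over $X$ if there is $\mathcal{E}\subseteq\mathbb{F}_p^V$ with $C=\{\underline{c}:\underline{e}\cdot\underline{c}=0\ \forall\underline{e}\in\mathcal{E}\}$ such that $\underline{e}\mapsto\operatorname{supp}(\underline{e})$ is a bijection $\mathcal{E}\to E$, and a set $\mathcal{T}$ of linear dependencies (functions $\operatorname{ld}:\mathcal{E}\to\mathbb{F}_p$ with $\sum_{\underline{e}}\operatorname{ld}(\underline{e})(\underline{e}\cdot\underline{c})=0$ for all $\underline{c}$) with $T=\{\{\operatorname{supp}(\underline{e}):\operatorname{ld}(\underline{e})\ne0\}:\operatorname{ld}\in\mathcal{T}\}$. *)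

(* Defs.v *)
From HB Require Import structures.
From mathcomp Require Import all_boot all_order all_algebra.
Set Implicit Arguments. Unset Strict Implicit. Unset Printing Implicit Defensive.
Import Order.TTheory GRing.Theory Num.Theory.
Local Open Scope ring_scope.

Definition supp (F : fieldType) (V : finType) (e : {ffun V -> F}) : {set V} :=
  [set v | e v != 0].

Definition dot (F : fieldType) (V : finType) (e c : {ffun V -> F}) : F :=
  \sum_(v : V) e v * c v.

Definition two_layer_system (V : finType) (s k K : nat)
    (E : {set {set V}}) (T : {set {set {set V}}}) : Prop :=
  ((0 < s) /\ (0 < k) /\ (0 < K) /\
      (forall tau, tau \in E -> #|tau| = k) /\
      \bigcup_(tau in E) tau = [set: V] /\
      (forall sigma, sigma \in T -> sigma \subset E /\ #|sigma| = K) /\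
      \bigcup_(sigma in T) sigma = E /\
      (forall sigma v, sigma \in T -> (exists2 tau, tau \in sigma & v \in tau) ->
         2 <= #|[set tau in sigma | v \in tau]| <= s))%N.

Definition Ev (V : finType) (E : {set {set V}}) (v : V) : {set {set V}} :=
  [set tau in E | v \in tau].

Definition m_edge (V : finType) (R : numDomainType) (T : {set {set {set V}}})
    (w : {set {set V}} -> R) (tau1 tau2 : {set V}) : R :=
  \sum_(sigma in T | (tau1 \in sigma) && (tau2 \in sigma)) w sigma.

(* m_v(tau): sum of weights of link edges at tau (non-adjacent pairs have weight 0) *)
Definition m_vert (V : finType) (R : numDomainType) (E : {set {set V}})
    (T : {set {set {set V}}}) (w : {set {set V}} -> R) (v : V) (tau : {set V}) : R :=
  \sum_(tau2 in Ev E v | tau2 != tau) m_edge T w tau tau2.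

Definition m_set (V : finType) (R : numDomainType) (E : {set {set V}})
    (T : {set {set {set V}}}) (w : {set {set V}} -> R) (v : V) (B : {set {set V}}) : R :=
  \sum_(tau in B) m_vert E T w v tau.

(* A linear dependency ld : calE -> F is represented by a finite function on
   all of F^V, only its values on calE being relevant. *)
Definition modelled_over (F : finFieldType) (V : finType)
    (E : {set {set V}}) (T : {set {set {set V}}})
    (C : {set {ffun V -> F}}) (calE : {set {ffun V -> F}})
    (calT : {set {ffun {ffun V -> F} -> F}}) : Prop :=
  [/\ C = [set c | [forall e in calE, dot e c == 0]],
      {in calE &, injective (@supp F V)},
      [set supp e | e in calE] = E,
      (forall ld : {ffun {ffun V -> F} -> F}, ld \in calT -> forall c : {ffun V -> F},
          \sum_(e in calE) ld e * dot e c = 0) &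
      T = [set [set supp e | e in calE & ld e != 0] | ld : {ffun {ffun V -> F} -> F} in calT]].

(* Main.v *)
Require Import Defs.
From HB Require Import structures.
From mathcomp Require Import all_boot all_order all_algebra ring.
Import Order.TTheory GRing.Theory Num.Theory.
Local Open Scope ring_scope.

Lemma card_nonzero_dot (F : finFieldType) (V : finType) (e c : {ffun V -> F}) (v0 : V) :
  e v0 != 0 ->
  #|[set a : F | dot e [ffun v => if v == v0 then a else c v] != 0]| = #|F|.-1.
Proof.
move=> ne0.
pose r := \sum_(v | v != v0) e v * c v.
have hd : forall a, dot e [ffun v => if v == v0 then a else c v] = e v0 * a + r.
  move=> a; rewrite /dot (bigD1 v0) //= ffunE eqxx; congr (_ + _).
  by apply: eq_bigr => v /negbTE hv; rewrite ffunE hv.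
rewrite -(cardsC1 (- r / e v0)); apply: eq_card => a.
rewrite !inE hd; congr negb; apply/eqP/eqP => H.
- apply: (mulfI ne0); rewrite [RHS]mulrC divfK // -[RHS]add0r -H; ring.
- by rewrite H mulrC divfK // addNr.
Qed.

Lemma key (R : realFieldType) (F : finFieldType) (V : finType)
  (P : pred {ffun V -> F}) (g : {ffun V -> F} -> R) (c : {ffun V -> F}) (v0 : V) :
  (forall e, P e -> e v0 != 0) ->
  \sum_(a : F) \sum_(e | P e && (dot e [ffun v => if v == v0 then a else c v] != 0)) g e
  = (#|F|.-1)%:R * \sum_(e | P e) g e.
Proof.
move=> HP.
under eq_bigr do rewrite big_mkcondr.
rewrite exchange_big /= big_distrr /=; apply: eq_bigr => e Pe.
rewrite -big_mkcond /= sumr_const -(@card_nonzero_dot _ _ e c v0 (HP e Pe)) mulr_natl cardsE.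
by [].
Qed.


Theorem lemma3p6 (R : realFieldType) (F : finFieldType) (V : finType)
    (s k K : nat) (E : {set {set V}}) (T : {set {set {set V}}})
    (w : {set {set V}} -> R)
    (C : {set {ffun V -> F}}) (calE : {set {ffun V -> F}})
    (calT : {set {ffun {ffun V -> F} -> F}}) :
  two_layer_system s k K E T ->
  (forall sigma, sigma \in T -> 0 < w sigma) ->
  modelled_over E T C calE calT ->
  forall (v0 : V) (c : {ffun V -> F}),
  exists c' : {ffun V -> F},
    (forall v, v != v0 -> c' v = c v) /\
    m_set E T w v0
      [set supp e | e in calE & (supp e \in Ev E v0) && (dot e c' != 0)]
    / m_set E T w v0 (Ev E v0)
    <= (#|F|.-1)%:R / (#|F|)%:R.
Proof.
move=> _ wpos [_ inj imE _ _] v0 c.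
pose g (e : {ffun V -> F}) := m_vert E T w v0 (supp e).
pose P e := (e \in calE) && (supp e \in Ev E v0).
pose ca (a : F) := [ffun v => if v == v0 then a else c v].
pose bad a := \sum_(e | P e && (dot e (ca a) != 0)) g e.
pose D := \sum_(e | P e) g e.
have HP : forall e, P e -> e v0 != 0.
  by move=> e /andP[_]; rewrite inE => /andP[_]; rewrite inE.
have Hsum := @key R F V P g c v0 HP.
have gge0 : forall tau, 0 <= m_vert E T w v0 tau.
  move=> tau; apply: sumr_ge0 => t _; apply: sumr_ge0 => sg /andP[sT _].
  exact: ltW (wpos _ sT).
have mbad : forall a, m_set E T w v0
      [set supp e | e in calE & (supp e \in Ev E v0) && (dot e (ca a) != 0)] = bad a.
  move=> a; rewrite /m_set big_imset /=.
    by apply: eq_bigl => e; rewrite /P !inE andbA.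
  by move=> x y; rewrite !inE => /andP[xE _] /andP[yE _]; apply: inj.
have mD : m_set E T w v0 (Ev E v0) = D.
  have -> : Ev E v0 = [set supp e | e in calE & supp e \in Ev E v0].
    apply/setP => tau; apply/idP/idP.
      move=> ht; have : tau \in E by move: ht; rewrite inE => /andP[].
      rewrite -{1}imE => /imsetP[e eE te]; apply/imsetP; exists e => //.
      by rewrite inE; apply/andP; split => //; rewrite -te.
    by move=> /imsetP[e]; rewrite inE => /andP[_ h] ->.
  rewrite /m_set big_imset /=; first by apply: eq_bigl => e; rewrite /P !inE.
  by move=> x y; rewrite !inE => /andP[xE _] /andP[yE _]; apply: inj.
have [a _ amin] : exists2 a, true & forall b, bad a <= bad b.
  case: (@arg_minP _ R F 0 predT bad isT) => a _ h; exists a => // b.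
  exact: h.
exists (ca a); split.
  by move=> v hv; rewrite ffunE (negbTE hv).
rewrite mbad mD.
have Dge0 : 0 <= D by apply: sumr_ge0 => e _; apply: gge0.
have qgt0 : (0 < #|F|)%N by apply/card_gt0P; exists 0.
have qR : 0 < (#|F|)%:R :> R by rewrite ltr0n.
have hq : bad a * (#|F|)%:R <= (#|F|.-1)%:R * D.
  rewrite -Hsum mulr_natr -sumr_const /=.
  by apply: ler_sum => b _; apply: amin.
case: (eqVneq D 0) => [->|Dn0].
  by rewrite invr0 mulr0 divr_ge0 // ler0n.
have Dgt0 : 0 < D by rewrite lt_def Dn0 Dge0.
rewrite ler_pdivrMr // mulrAC ler_pdivlMr //.
Qed.
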